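(* Let $s,k$ be job indices and let $S$ be an $(s,k)$-schedule (with the earliest-deadline property) with $C_{\max}(S)=t$. Suppose $[u,t)$ is a fixed segment of $S$. Then every job $i\le k$ with $u<C_i(S)\le t$ satisfies $C_i(S)=C^{\mathrm{edf}}_{s,i}$.
   Context: Time is discrete (slots $[t,t+1)$). There are $n$ jobs, job $j$ with integer processing time $p_j\ge1$, release time $r_j$, deadline $d_j$; jobs are indexed so that $d_1<\dots<d_n$, release times are pairwise distinct, and the instance is feasible. A (partial) schedule assigns to each slot at most one job so that each job it schedules receives exactly $p_j$ slots within $[r_j,d_j)$; $C_j(S)$ is the completion time of $j$ and $C_{\max}(S)=\max_jC_j(S)$. The earliest-deadline property: whenever $S$ is busy at slot $t$, it executes the released, not yet completed scheduled job with smallest deadline; all schedules are assumed to have this property. For $s\in\{1,\dots,n\}$, $k\in\{0,\dots,n\}$, an $(s,k)$-schedule is a schedule $S$ with $C_{\max}(S)\le d_k$ that schedules exactly the jobs $j\le k$ with $r_s\le r_j<C_{\max}(S)$ (the empty schedule counts, with $C_{\max}=r_s$). For $r_i\ge r_s$, $C^{\mathrm{edf}}_{s,i}$ is the minimum completion time of job $i$ over all $(s,i)$-schedules that schedule $i$. An interval $[t',t)$ in which $S$ is busy at every slot is a fixed segment of $S$ if every job executed by $S$ in $[t',t)$ is released in $[t',t)$ and has all its slots in $[t',t)$. *)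

(* Defs.v *)
From mathcomp Require Import all_boot.
Set Implicit Arguments. Unset Strict Implicit. Unset Printing Implicit Defensive.

(* An instance: jobs are indexed 1..n; time is nat (slot t = [t,t+1)). *)
Record instance := Instance {
  njobs : nat;
  ptime : nat -> nat;
  rel   : nat -> nat;
  dl    : nat -> nat
}.

Definition schedule := nat -> option nat.

Definition scheduled (S : schedule) (j : nat) : Prop := exists t, S t = Some j.

Definition valid_schedule (I : instance) (S : schedule) : Prop :=
  (forall t j, S t = Some j -> 1 <= j <= njobs I /\ rel I j <= t < dl I j) /\
  (forall j, scheduled S j -> \sum_(t < dl I j) (S t == Some j) = ptime I j).

(* Completion time C_j(S) (last slot + 1); equals 0 iff j is not scheduled. *)
Definition Ctime (I : instance) (S : schedule) (j : nat) : nat :=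
  \max_(t < dl I j | S t == Some j) t.+1.

Definition Cmax (I : instance) (S : schedule) : nat :=
  \max_(1 <= j < (njobs I).+1) Ctime I S j.

(* C_max with the convention C_max(empty) = r_s used for (s,k)-schedules. *)
Definition Cmax_s (I : instance) (s : nat) (S : schedule) : nat :=
  if Cmax I S == 0 then rel I s else Cmax I S.

Definition edf (I : instance) (S : schedule) : Prop :=
  forall t j, S t = Some j ->
  forall j', scheduled S j' -> rel I j' <= t -> t < Ctime I S j' ->
    dl I j <= dl I j'.

Definition valid_instance (I : instance) : Prop :=
  (forall j, 1 <= j <= njobs I -> 1 <= ptime I j) /\
  (forall j j', 1 <= j -> j < j' -> j' <= njobs I -> dl I j < dl I j') /\
  (forall j j', 1 <= j <= njobs I -> 1 <= j' <= njobs I ->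
      rel I j = rel I j' -> j = j') /\
  (exists S, valid_schedule I S /\ forall j, 1 <= j <= njobs I -> scheduled S j).

Definition sk_schedule (I : instance) (s k : nat) (S : schedule) : Prop :=
  valid_schedule I S /\ edf I S /\
  Cmax_s I s S <= dl I k /\
  (forall j, scheduled S j <->
     (1 <= j <= k /\ rel I s <= rel I j /\ rel I j < Cmax_s I s S)).

Definition is_Cedf (I : instance) (s i c : nat) : Prop :=
  (exists S', sk_schedule I s i S' /\ scheduled S' i /\ Ctime I S' i = c) /\
  (forall S', sk_schedule I s i S' -> scheduled S' i -> c <= Ctime I S' i).

Definition fixed_segment (I : instance) (S : schedule) (u t : nat) : Prop :=
  forall x, u <= x < t -> exists j, S x = Some j /\
    u <= rel I j < t /\ (forall y, S y = Some j -> u <= y < t).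

(* Main.v *)
Require Import Defs.
From mathcomp Require Import all_boot.
From mathcomp Require Import zify.
Import Defs.
Set Implicit Arguments. Unset Strict Implicit. Unset Printing Implicit Defensive.

Lemma sum_zero_range (f : nat -> nat) (lo hi : nat) :
  (forall x, lo <= x < hi -> f x = 0) -> \sum_(lo <= x < hi) f x = 0.
Proof.
move=> H; rewrite big1_seq // => x /andP[_]; rewrite mem_index_iota; exact: H.
Qed.

Lemma L_zero_out (a b N : nat) (f : nat -> nat) :
  a <= b -> b <= N -> (forall x, f x != 0 -> a <= x < b) ->
  \sum_(0 <= x < N) f x = \sum_(a <= x < b) f x.
Proof.
move=> hab hbN H.
have Z : forall x, ~~ (a <= x < b) -> f x = 0.
  by move=> x hx; apply/eqP; apply: contraNT hx; apply: H.
rewrite (big_cat_nat _ (n:=a)) //; last by lia.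
rewrite (big_cat_nat _ (n:=b) (m:=a)) //.
rewrite (@sum_zero_range f 0 a); last by move=> x hx; apply: Z; lia.
rewrite (@sum_zero_range f b N); last by move=> x hx; apply: Z; lia.
rewrite /=; lia.
Qed.

Lemma L_sub (a b N : nat) (f : nat -> nat) :
  b <= N -> \sum_(a <= x < b) f x <= \sum_(0 <= x < N) f x.
Proof.
move=> hbN.
case: (leqP a b) => hab; last by rewrite big_geq // ltnW.
rewrite (big_cat_nat _ (n:=a) (m:=0)) //=; last by lia.
rewrite (big_cat_nat _ (n:=b) (m:=a) (p:=N)) //=.
lia.
Qed.

Lemma L_point (a b y : nat) (f : nat -> nat) :
  a <= y < b -> f y <= \sum_(a <= x < b) f x.
Proof.
move=> /andP[h1 h2].
rewrite (big_cat_nat _ (n:=y) (m:=a) (p:=b)); [|lia|lia].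
rewrite [X in _ <= _ + X]big_ltn //=; lia.
Qed.

Lemma L_strict (a b y : nat) (f g : nat -> nat) :
  (forall x, a <= x < b -> f x <= g x) -> a <= y < b -> f y < g y ->
  \sum_(a <= x < b) f x < \sum_(a <= x < b) g x.
Proof.
move=> H /andP[h1 h2] hy.
rewrite (big_cat_nat _ (n:=y) (m:=a) (p:=b)); [|lia|lia].
rewrite [X in _ < X](big_cat_nat _ (n:=y) (m:=a) (p:=b)); [|lia|lia].
rewrite [X in _ + X < _]big_ltn // [X in _ < _ + X]big_ltn //.
have A : \sum_(a <= x < y) f x <= \sum_(a <= x < y) g x.
  rewrite big_seq_cond [X in _ <= X]big_seq_cond; apply: leq_sum => x /andP[].
  rewrite mem_index_iota => hx _; apply: H; lia.
have B : \sum_(y.+1 <= x < b) f x <= \sum_(y.+1 <= x < b) g x.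
  rewrite big_seq_cond [X in _ <= X]big_seq_cond; apply: leq_sum => x /andP[].
  rewrite mem_index_iota => hx _; apply: H; lia.
rewrite /=; lia.
Qed.

Lemma L_atmost1 (N : nat) (P : pred nat) (o : option nat) :
  \sum_(0 <= j < N | P j) (o == Some j) <= 1.
Proof.
apply: (@leq_trans (\sum_(0 <= j < N) (o == Some j))).
  rewrite [X in _ <= X](bigID P) /=; apply: leq_addr.
case: o => [j0|]; last by rewrite big1.
rewrite (eq_bigr (fun j => if j == j0 then 1 else 0)); last first.
  move=> j _; case: (eqVneq j j0) => [->|ne]; first by rewrite eqxx.
  have -> : (Some j0 == Some j) = false by apply/eqP => -[] h; rewrite h eqxx in ne.
  by [].
rewrite -big_mkcond sum1_count.
have -> : count (fun j => j == j0) (index_iota 0 N) = count_mem j0 (index_iota 0 N) by [].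
by rewrite count_uniq_mem ?iota_uniq // leq_b1.
Qed.

Lemma L_point_f (N : nat) (Q : pred nat) (F : nat -> nat) (y : nat) :
  Q y -> y < N -> F y <= \sum_(0 <= j < N | Q j) F j.
Proof.
move=> hq hy; rewrite big_mkcond.
have := @L_point 0 N y (fun j => if Q j then F j else 0).
rewrite /= hq; apply; lia.
Qed.

Lemma CT_ge (I : instance) (S : schedule) (j x : nat) :
  S x = Some j -> x < dl I j -> x < Ctime I S j.
Proof.
move=> hS hx; rewrite /Ctime.
have := @leq_bigmax_cond _ (fun t : 'I_(dl I j) => S t == Some j)
   (fun t => (nat_of_ord t).+1) (Ordinal hx).
by rewrite /= hS eqxx; apply.
Qed.

Lemma CT_le (I : instance) (S : schedule) (j b : nat) :
  (forall y, S y = Some j -> y < dl I j -> y < b) -> Ctime I S j <= b.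
Proof.
move=> H; rewrite /Ctime; apply/bigmax_leqP => t /eqP ht; exact: H.
Qed.

Lemma CT_pos (I : instance) (S : schedule) (j : nat) :
  0 < Ctime I S j -> exists y, [/\ S y = Some j, Ctime I S j = y.+1 & y < dl I j].
Proof.
rewrite /Ctime.
case: (posnP #|[pred t : 'I_(dl I j) | S t == Some j]|) => hc.
  have h0 := card0_eq hc.
  rewrite big_pred0 // => t; have := h0 t; by rewrite !inE.
have [i0 hi0 ->] := eq_bigmax_cond (fun t : 'I_(dl I j) => (nat_of_ord t).+1) hc.
move=> _; exists i0; split.
- by move: hi0; rewrite inE => /eqP.
- by [].
- exact: ltn_ord.
Qed.

Lemma VS_slot (I : instance) (S : schedule) (j x : nat) :
  valid_schedule I S -> S x = Some j -> 1 <= j <= njobs I /\ rel I j <= x < dl I j.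
Proof. by move=> [H _]; apply: H. Qed.

Lemma VS_sum (I : instance) (S : schedule) (j : nat) :
  valid_schedule I S -> scheduled S j ->
  \sum_(0 <= t < dl I j) (S t == Some j) = ptime I j.
Proof. by move=> [_ H] hs; rewrite big_mkord; apply: H. Qed.

Lemma sched_pos (I : instance) (S : schedule) (j : nat) :
  valid_schedule I S -> (scheduled S j <-> 0 < Ctime I S j).
Proof.
move=> HV; split.
  move=> [x hx]; have [_ /andP[_ h]] := VS_slot HV hx.
  have := CT_ge hx h; lia.
by move=> /CT_pos [y [hy _ _]]; exists y.
Qed.

Lemma Kedf (I : instance) (HI : valid_instance I) (T : schedule)
  (HV : valid_schedule I T) (HE : edf I T) (i j : nat) :
  1 <= j -> j <= i -> i <= njobs I -> 0 < Ctime I T i -> scheduled T j ->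
  rel I j < Ctime I T i -> Ctime I T j <= Ctime I T i.
Proof.
move=> h1 hji hin hpos hsj hrel.
case: (eqVneq j i) => [->|ne] //.
rewrite leqNgt; apply/negP => hlt.
have [y [hy hC _]] := CT_pos hpos.
have := HE y i hy j hsj.
have e1 : rel I j <= y by lia.
have e2 : y < Ctime I T j by lia.
move=> /(_ e1 e2) hd.
case: HI => _ [Hdl _].
have := Hdl j i h1 ltac:(lia) hin; lia.
Qed.

Lemma Cmax_ge (I : instance) (T : schedule) (s j : nat) :
  1 <= j <= njobs I -> 0 < Ctime I T j -> Ctime I T j <= Cmax_s I s T.
Proof.
move=> hj hp.
have h : Ctime I T j <= Cmax I T.
  by rewrite /Cmax; apply: leq_bigmax_seq => //; rewrite mem_index_iota; lia.
rewrite /Cmax_s; case: eqP => // e; lia.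
Qed.

Lemma existence_part (I : instance) (HI : valid_instance I)
  (s k : nat) (Hk : k <= njobs I)
  (S : schedule) (HS : sk_schedule I s k S) (i : nat)
  (hi1 : 1 <= i) (hik : i <= k) (C : nat) (HC : Ctime I S i = C) (Cpos : 0 < C)
  (hCt : C <= Cmax_s I s S) :
  exists S', sk_schedule I s i S' /\ scheduled S' i /\ Ctime I S' i = C.
Proof.
case: HS => HV [HE [HCd Hchar]].
have [y0 [Sy0 Cy0 y0dl]] := CT_pos (ltac:(lia) : 0 < Ctime I S i).
pose S' : schedule := fun x => if x < C then
   (if S x is Some j then (if j <= i then Some j else None) else None) else None.
have spec : forall y j, S' y = Some j <-> [/\ y < C, S y = Some j & j <= i].
  move=> y j; rewrite /S'; case: ltnP => hy; last by split => // -[]; lia.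
  case hS: (S y) => [j'|]; last by split => // -[].
  case: leqP => hj; split.
  - by case=> <-; split.
  - by case=> _ [->].
  - by [].
  - by case=> _ [<-]; lia.
have compl : forall x j, S x = Some j -> x < C -> j <= i ->
    forall y, S y = Some j -> y < C.
  move=> x j hx hxC hj y hy.
  have [/andP[h1 _] /andP[hr _]] := VS_slot HV hx.
  have [_ /andP[_ hyd]] := VS_slot HV hy.
  have := CT_ge hy hyd.
  have := @Kedf I HI S HV HE i j h1 hj ltac:(lia) ltac:(lia) (ex_intro _ x hx) ltac:(lia).
  lia.
have same : forall j, scheduled S' j -> forall y, (S' y == Some j) = (S y == Some j).
  move=> j [x /spec [hxC hx hj]] y.
  apply/eqP/eqP => [/spec [] //|hy].
  apply/spec; split => //; exact: compl hx hxC hj y hy.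
have CTsame : forall j, scheduled S' j -> Ctime I S' j = Ctime I S j.
  by move=> j hj; rewrite /Ctime; apply: eq_bigl => t; rewrite same.
have schS : forall j, scheduled S' j -> scheduled S j.
  by move=> j [x /spec [_ hx _]]; exists x.
have schi : scheduled S' i by exists y0; apply/spec; split => //; lia.
have CmaxC : Cmax I S' = C.
  apply/eqP; rewrite eqn_leq; apply/andP; split.
    apply/bigmax_leqP_seq => j _ _; apply: CT_le => y /spec [] //.
  rewrite /Cmax -HC -(CTsame i schi); apply: leq_bigmax_seq => //.
  rewrite mem_index_iota; lia.
have CmaxsC : Cmax_s I s S' = C by rewrite /Cmax_s CmaxC; case: eqP => //; lia.
exists S'; split; last by split => //; rewrite CTsame.
split.
  split.
    by move=> t j /spec [_ h _]; exact: (VS_slot HV h).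
  move=> j hj; rewrite -(VS_sum HV (schS j hj)) big_mkord; apply: eq_bigr => t _.
  by rewrite same.
split.
  move=> t j /spec [_ ht _] j' hj' hr hlt.
  apply: (HE t j ht j' (schS j' hj') hr); by rewrite -CTsame.
split; first by rewrite CmaxsC -HC Cy0.
move=> j; rewrite CmaxsC; split.
  move=> hj; have [x /spec [hxC hx hji]] := hj.
  have [/andP[h1 _] /andP[hr _]] := VS_slot HV hx.
  have := (proj1 (Hchar j) (schS j hj)); lia.
move=> [/andP[h1 hji] [hs hr]].
have hsj : scheduled S j by apply/Hchar; lia.
have := @Kedf I HI S HV HE i j h1 hji ltac:(lia) ltac:(lia) hsj ltac:(lia).
move: (hsj) => /(sched_pos _ HV) /CT_pos [y [hy hCy _]] hle.
exists y; apply/spec; split => //; lia.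
Qed.

Lemma minimality_part (I : instance) (HI : valid_instance I)
  (s k : nat) (Hk : k <= njobs I)
  (S : schedule) (HS : sk_schedule I s k S) (t u : nat)
  (Ht : Cmax_s I s S = t) (Hfix : fixed_segment I S u t) (i : nat)
  (hi1 : 1 <= i) (hik : i <= k) (C : nat) (HC : Ctime I S i = C)
  (huC : u < C) (hCt : C <= t) :
  forall S2, sk_schedule I s i S2 -> scheduled S2 i -> C <= Ctime I S2 i.
Proof.
move=> S2 HS2 sch2.
case: HS => HV [HE [HCd Hchar]].
case: HS2 => HV2 [HE2 [HCd2 Hchar2]].
have Hdl := proj1 (proj2 HI).
have [y0 [Sy0 Cy0 y0dl]] := CT_pos (ltac:(lia) : 0 < Ctime I S i).
set c := Ctime I S2 i.
have cpos : 0 < c by apply/(sched_pos _ HV2).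
have [y2 [Sy2 Cy2 y2dl]] := CT_pos cpos.
have cCm2 : c <= Cmax_s I s S2 by apply: Cmax_ge => //; lia.
rewrite leqNgt; apply/negP => hcC.
pose good v := (u <= v) &&
   all (fun x => if S x is Some j then j <= i else false) (index_iota v C).
have exg : exists v, good v.
  by exists C; rewrite /good /index_iota subnn /=; lia.
case: (ex_minnP exg) => v /andP [uv allv] vmin.
have Gv : forall x, v <= x < C -> exists j, S x = Some j /\ j <= i.
  move=> x hx; move/allP: allv => /(_ x); rewrite mem_index_iota => /(_ hx).
  by case: (S x) => // j hj; exists j.
have vC : v <= C by apply: vmin; rewrite /good /index_iota subnn /=; lia.
have Bv : u < v -> exists j0, S v.-1 = Some j0 /\ i < j0.
  move=> huv.
  have [j0 [hj0 _]] := Hfix v.-1 ltac:(lia).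
  exists j0; split => //; rewrite ltnNge; apply/negP => hj0i.
  have : v <= v.-1; last by lia.
  apply: vmin; rewrite /good; apply/andP; split; first by lia.
  have -> : index_iota v.-1 C = v.-1 :: index_iota v C.
    rewrite /index_iota; have -> : C - v.-1 = (C - v).+1 by lia.
    by rewrite /= prednK //; lia.
  by rewrite /= hj0 hj0i.
have vltC : v < C.
  rewrite ltn_neqAle vC andbT; apply/eqP => evC.
  have [j0 [hj0 hij0]] := Bv ltac:(lia).
  have : v.-1 = y0 by lia.
  move=> e; rewrite e Sy0 in hj0; case: hj0 => hh; lia.
have R : forall x j, v <= x < C -> S x = Some j -> v <= rel I j.
  move=> x j hx hSx.
  have [j' [hj' [/andP [hu _] _]]] := Hfix x ltac:(lia).
  rewrite hSx in hj'; case: hj' => ej; subst j'.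
  case: (leqP v u) => hvu; first by lia.
  have [j0 [hj0 hij0]] := Bv hvu.
  rewrite leqNgt; apply/negP => hrj.
  have [j1 [hj1 hj1i]] := Gv x hx.
  rewrite hSx in hj1; case: hj1 => ej1; subst j1.
  have [/andP [h1 _] /andP [_ hxd]] := VS_slot HV hSx.
  have [/andP [_ hj0n] _] := VS_slot HV hj0.
  have := HE v.-1 j0 hj0 j (ex_intro _ x hSx) ltac:(lia).
  have := CT_ge hSx hxd.
  move=> hct /(_ ltac:(lia)) hd.
  have := Hdl j j0 h1 ltac:(lia) hj0n; lia.
have vri : v <= rel I i by apply: (R y0); [lia|].
have [_ /andP [hri2 _]] := VS_slot HV2 Sy2.
pose Q j := [&& 1 <= j, j <= i, v <= rel I j, rel I j < c & rel I s <= rel I j].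
have schi : scheduled S i by exists y0.
have Qi : Q i.
  have := proj1 (Hchar i) schi; rewrite /Q; lia.
have QS : forall j, Q j -> scheduled S j.
  move=> j /and5P [q1 q2 q3 q4 q5]; apply/Hchar; lia.
have QS2 : forall j, Q j -> scheduled S2 j.
  move=> j /and5P [q1 q2 q3 q4 q5]; apply/Hchar2; lia.
set n := njobs I.
have in_n : i <= n by lia.
have step1 : c - v <= \sum_(0 <= j < n.+1 | Q j) \sum_(v <= x < c) (S x == Some j).
  rewrite exchange_big /=.
  have -> : c - v = \sum_(v <= x < c) 1 by rewrite sum_nat_const_nat muln1.
  rewrite big_seq [X in _ <= X]big_seq; apply: leq_sum => x.
  rewrite mem_index_iota => hx.
  have [j [hSx hji]] := Gv x ltac:(lia).
  have [/andP [h1 hjn] /andP [hrx _]] := VS_slot HV hSx.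
  have Qj : Q j.
    have := R x j ltac:(lia) hSx.
    have := proj1 (Hchar j) (ex_intro _ x hSx).
    rewrite /Q; lia.
  have := @L_point_f n.+1 Q (fun j => nat_of_bool (S x == Some j)) j Qj ltac:(lia).
  by rewrite /= hSx eqxx.
have step2 : \sum_(0 <= j < n.+1 | Q j) \sum_(v <= x < c) (S x == Some j)
             < \sum_(0 <= j < n.+1 | Q j) ptime I j.
  rewrite big_mkcond [X in _ < X]big_mkcond /=.
  apply: (@L_strict 0 n.+1 i); last first.
  - rewrite Qi.
    rewrite -(VS_sum HV schi).
    rewrite -(@L_zero_out 0 (dl I i) (c + dl I i)); [|lia|lia|]; last first.
      by move=> x; case hx: (S x == _) => // _; move/eqP: hx => hx; have := VS_slot HV hx; lia.
    rewrite (@big_cat_nat _ _ _ c 0 (c + dl I i)); [|lia|lia].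
    have h1 := @L_sub v c c (fun x => nat_of_bool (S x == Some i)) (leqnn c).
    have h2 := @L_point c (c + dl I i) y0 (fun x => nat_of_bool (S x == Some i)) ltac:(lia).
    move: h1 h2; rewrite /= Sy0 eqxx /=; lia.
  - lia.
  - move=> j _; case Qj: (Q j) => //.
    rewrite -(VS_sum HV (QS j Qj)).
    rewrite -(@L_zero_out 0 (dl I j) (c + dl I j)); [|lia|lia|]; last first.
      by move=> x; case hx: (S x == _) => // _; move/eqP: hx => hx; have := VS_slot HV hx; lia.
    by apply: L_sub; lia.
have step3 : \sum_(0 <= j < n.+1 | Q j) ptime I j
             = \sum_(0 <= j < n.+1 | Q j) \sum_(v <= x < c) (S2 x == Some j).
  apply: eq_bigr => j Qj.
  rewrite -(VS_sum HV2 (QS2 j Qj)).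
  rewrite -(@L_zero_out 0 (dl I j) (c + dl I j)); [|lia|lia|]; last first.
    by move=> x; case hx: (S2 x == _) => // _; move/eqP: hx => hx; have := VS_slot HV2 hx; lia.
  apply: L_zero_out; [lia|lia|].
  move=> x; case hx: (S2 x == _) => // _; move/eqP: hx => hx.
  have [_ /andP [hrx hxd]] := VS_slot HV2 hx.
  move: Qj => /and5P [q1 q2 q3 q4 q5].
  have := @Kedf I HI S2 HV2 HE2 i j q1 q2 in_n cpos (QS2 j ltac:(rewrite /Q; lia)) q4.
  have := CT_ge hx hxd; rewrite -/c; lia.
have step4 : \sum_(0 <= j < n.+1 | Q j) \sum_(v <= x < c) (S2 x == Some j) <= c - v.
  rewrite exchange_big /=.
  have -> : c - v = \sum_(v <= x < c) 1 by rewrite sum_nat_const_nat muln1.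
  apply: leq_sum => x _; exact: L_atmost1.
lia.
Qed.

Theorem lemma2 (I : instance) (HI : valid_instance I)
  (s k : nat) (Hs : 1 <= s <= njobs I) (Hk : k <= njobs I)
  (S : schedule) (HS : sk_schedule I s k S)
  (t : nat) (Ht : Cmax_s I s S = t)
  (u : nat) (Hfix : fixed_segment I S u t) :
  forall i, 1 <= i <= k -> u < Ctime I S i <= t ->
    is_Cedf I s i (Ctime I S i).
Proof.
move=> i /andP [hi1 hik] /andP [huC hCt].
split.
  apply: (existence_part HI Hk HS hi1 hik erefl); lia.
move=> S' HS' sch'.
exact: (minimality_part HI Hk HS Ht Hfix hi1 hik erefl huC hCt HS' sch').
Qed.
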